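(* For every $n\ge1$, the minimum number of flippable faces of a locally valid MV assignment of $M_{2,n}$ is $2$. Moreover, for every $n\ge 2$, exactly four locally valid MV assignments of $M_{2,n}$ have exactly $2$ flippable faces, and each of them is colored magenta (i.e., has the same number of flippable faces as its restriction to $M_{2,n-1}$).
   Context: The $2\times n$ Miura-ori $M_{2,n}$ ($n\ge1$) has faces $\alpha_{i,j}$ ($i\in\{1,2\}$, $j\in\{1,\dots,n\}$), interior vertices $x_1,\dots,x_{n-1}$, and creases $e_0$ and $e_{3k-1},e_{3k},e_{3k+1}$ ($k=1,\dots,n-1$). At $x_k$ the creases are left $e_{3k-3}$, top $e_{3k-1}$, right $e_{3k}$, bottom $e_{3k+1}$. Face $\alpha_{1,j}$ is bordered by those of $e_{3j-4}$ (iff $j\ge2$), $e_{3j-3}$, $e_{3j-1}$ (iff $j\le n-1$); $\alpha_{2,j}$ by those of $e_{3j-2}$ (iff $j\ge2$), $e_{3j-3}$, $e_{3j+1}$ (iff $j\le n-1$). An MV assignment $\mu$ maps creases to $\{1,-1\}$ (mountain/valley); it is locally valid if for each $k$ exactly one of $\mu(e_{3k-1}),\mu(e_{3k}),\mu(e_{3k+1})$ differs from $\mu(e_{3k-3})$. The face flip $\mu_\alpha$ negates $\mu$ on the creases bordering $\alpha$; $\alpha$ is flippable under $\mu$ if $\mu,\mu_\alpha$ are both locally valid; $f(\mu)$ is the number of flippable faces (the degree of $\mu$ in the origami flip graph). For $n\ge2$, the restriction of a locally valid assignment $\mu'$ of $M_{2,n}$ to the creases of $M_{2,n-1}$ (all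 creases except $e_{3n-4},e_{3n-3},e_{3n-2}$) is a locally valid assignment $\mu$ of $M_{2,n-1}$; $\mu'$ is colored blue, orange or magenta according as $f(\mu')-f(\mu)$ equals $2$, $1$ or $0$. Both locally valid assignments of $M_{2,1}$ are colored blue. *)

(* Defs.v *)
From mathcomp Require Import all_boot.
Set Implicit Arguments. Unset Strict Implicit. Unset Printing Implicit Defensive.

(* Creases of M_{2,n}: e_0 and e_2, ..., e_{3n-2} (index 1 is unused).
   An MV assignment is stored as a (3n-2)-tuple of booleans:
   crease e_k is stored at position pos k (0 -> 0, k >= 2 -> k-1).
   Boolean true encodes mountain (+1), false encodes valley (-1). *)
Definition pos (k : nat) : nat := if k == 0 then 0 else k.-1.

Definition MV (n : nat) := (3 * n - 2).-tuple bool.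

Definition mv_at (s : seq bool) (k : nat) : bool := nth false s (pos k).

Definition lv_fun (n : nat) (m : nat -> bool) : bool :=
  all (fun k => ((m (3*k-1) != m (3*k-3)) + (m (3*k) != m (3*k-3))
                 + (m (3*k+1) != m (3*k-3)) == 1)%N)
      (iota 1 n.-1).

(* creases bordering face alpha_{i,j}; row i = 0 means row 1, i = 1 means row 2;
   j ranges over 1..n *)
Definition border (n : nat) (i : 'I_2) (j : nat) : seq nat :=
  if val i == 0 then
    (if 2 <= j then [:: 3*j-4] else [::]) ++ [:: 3*j-3]
      ++ (if j <= n-1 then [:: 3*j-1] else [::])
  else
    (if 2 <= j then [:: 3*j-2] else [::]) ++ [:: 3*j-3]
      ++ (if j <= n-1 then [:: 3*j+1] else [::]).

Definition flip_fun (n : nat) (i : 'I_2) (j : nat) (m : nat -> bool) : nat -> bool :=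
  fun k => if k \in border n i j then ~~ m k else m k.

Definition locally_valid (n : nat) (s : seq bool) : bool := lv_fun n (mv_at s).

Definition flippable (n : nat) (s : seq bool) (i : 'I_2) (j : nat) : bool :=
  lv_fun n (mv_at s) && lv_fun n (flip_fun n i j (mv_at s)).

(* number of flippable faces; faces alpha_{i+1, j+1} for i : 'I_2, j : 'I_n *)
Definition nflip (n : nat) (s : seq bool) : nat :=
  #|[pred ij : 'I_2 * 'I_n | flippable n s ij.1 (val ij.2).+1]|.

(* restriction of an assignment of M_{2,n} to the creases of M_{2,n-1}
   (drops e_{3n-4}, e_{3n-3}, e_{3n-2}, the last three positions) *)
Definition restrict (n : nat) (s : seq bool) : seq bool := take (3 * n.-1 - 2) s.

Definition magenta (n : nat) (s : seq bool) : Prop :=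
  nflip n s = nflip n.-1 (restrict n s).

(* Main.v *)
Require Import Defs.
From mathcomp Require Import all_boot zify.

Definition V (m : nat -> bool) (k : nat) : bool :=
  ((m (3*k-1) != m (3*k-3)) + (m (3*k) != m (3*k-3)) + (m (3*k+1) != m (3*k-3)) == 1)%N.
Definition tT (m : nat -> bool) k := m (3*k-1) != m (3*k-3).
Definition tB (m : nat -> bool) k := m (3*k+1) != m (3*k-3).

Lemma lvP n m : reflect (forall k, 1 <= k <= n.-1 -> V m k) (lv_fun n m).
Proof.
rewrite /lv_fun; apply: (iffP allP) => H k.
  by move=> hk; apply: H; rewrite mem_iota; lia.
by rewrite mem_iota => hk; apply: H; lia.
Qed.

Lemma V_ext m m' k : m (3*k-3) = m' (3*k-3) -> m (3*k-1) = m' (3*k-1) ->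
  m (3*k) = m' (3*k) -> m (3*k+1) = m' (3*k+1) -> V m k = V m' k.
Proof. by rewrite /V => -> -> -> ->. Qed.

Lemma in_border n (i : 'I_2) (j d : nat) : (d \in border n i j) =
  if val i == 0 then ((2 <= j) && (d == 3*j-4)) || (d == 3*j-3) || ((j <= n-1) && (d == 3*j-1))
  else ((2 <= j) && (d == 3*j-2)) || (d == 3*j-3) || ((j <= n-1) && (d == 3*j+1)).
Proof.
rewrite /border; case: ifP => _; case: ifP => _; case: ifP => _;
  rewrite /= !inE ?orbF ?orbA //. all: idtac.
Qed.

Ltac decide_ifs := repeat match goal with
 | |- context [if ?b then _ else _] =>
     first [ have -> : b = true by lia | have -> : b = false by lia ]
 end.

Lemma excl m k : V m k -> ~~ (tT m k && tB m k).
Proof.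
rewrite /V /tT /tB; case: (m (3*k-1)); case: (m (3*k-3)); case: (m (3*k)); by case: (m (3*k+1)).
Qed.

Lemma Vflip_other n (i : 'I_2) (j : nat) m (k : nat) : 1 <= j -> 1 <= k -> k != j -> k.+1 != j ->
  V (flip_fun n i j m) k = V m k.
Proof.
move=> h0 h1 h2 h3; rewrite /V /flip_fun !in_border.
by case: (val i == 0); decide_ifs.
Qed.

Lemma Vflip_j n (i : 'I_2) (j : nat) m : 1 <= j <= n-1 -> V m j ->
  V (flip_fun n i j m) j = if val i == 0 then ~~ tT m j else ~~ tB m j.
Proof.
move=> hj; rewrite /V /flip_fun /tT /tB !in_border.
case: (val i == 0); decide_ifs;
case: (m (3*j-1)); case: (m (3*j-3)); case: (m (3*j)); by case: (m (3*j+1)).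
Qed.

Lemma Vflip_jm1 n (i : 'I_2) (j : nat) m : 2 <= j <= n -> V m (j-1) ->
  V (flip_fun n i j m) (j-1) = if val i == 0 then ~~ tB m (j-1) else ~~ tT m (j-1).
Proof.
move=> hj; rewrite /V /flip_fun /tT /tB !in_border.
case: (val i == 0); decide_ifs;
case: (m (3*(j-1)-1)); case: (m (3*(j-1)-3)); case: (m (3*(j-1))); by case: (m (3*(j-1)+1)).
Qed.

Definition fform n (m : nat -> bool) (i : 'I_2) (j : nat) : bool :=
  if val i == 0 then ((j == 1) || ~~ tB m (j-1)) && ((j == n) || ~~ tT m j)
  else ((j == 1) || ~~ tT m (j-1)) && ((j == n) || ~~ tB m j).

Lemma flipE n s (i : 'I_2) (j : nat) : locally_valid n s -> 1 <= j <= n ->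
  flippable n s i j = fform n (mv_at s) i j.
Proof.
rewrite /flippable /locally_valid => hlv hj; rewrite hlv /=.
have hV := (elimT (lvP n _) hlv).
set m := mv_at s; set f := flip_fun n i j m.
have E1 : (j == 1) || V f (j-1) =
   (j==1) || (if val i == 0 then ~~tB m (j-1) else ~~tT m (j-1)).
  case: eqP => //= h; rewrite /f Vflip_jm1 //; [lia | apply: hV; lia].
have E2 : (j == n) || V f j =
   (j==n) || (if val i == 0 then ~~tT m j else ~~tB m j).
  case: eqP => //= h; rewrite /f Vflip_j //; [lia | apply: hV; lia].
have L : lv_fun n f = ((j==1) || V f (j-1)) && ((j==n) || V f j).
  apply/lvP/andP.
  - by move=> H; split; case: eqP => //= h; apply: H; lia.
  - case=> A B k hk.
    case: (boolP (k == j-1)) => [/eqP ek|h1].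
      by move: A; case: eqP => [hj1|_ /=]; [lia | rewrite ek].
    case: (boolP (k == j)) => [/eqP ek|h2].
      by move: B; case: eqP => [hjn|_ /=]; [lia | rewrite ek].
    rewrite /f Vflip_other; [apply: hV | | | |]; lia.
by rewrite L E1 E2 /fform; case: (val i == 0).
Qed.

Definition gv (c b : bool) (d : nat) : bool := if d %% 3 == (if c then 2 else 1) then ~~ b else b.
Definition crease (p : nat) := if p == 0 then 0 else p.+1.
Definition gen n c b : seq bool := mkseq (fun p => gv c b (crease p)) (3*n-2).

Lemma size_gen n c b : size (gen n c b) == 3*n-2.
Proof. by rewrite size_mkseq. Qed.

Lemma pos_crease p : pos (crease p) = p.
Proof. by case: p. Qed.

Lemma mv_at_gen n c b d : 1 <= n -> d != 1 -> d <= 3*n-2 -> mv_at (gen n c b) d = gv c b d.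
Proof.
move=> hn h1 h2; rewrite /mv_at /gen nth_mkseq; last by rewrite /pos; case: eqP => _; lia.
by rewrite /pos /crease; case: d h1 h2 => [|[|d]].
Qed.

Lemma gen_V n c b k : 1 <= k <= n-1 ->
  [/\ V (mv_at (gen n c b)) k, tT (mv_at (gen n c b)) k = c & tB (mv_at (gen n c b)) k = ~~ c].
Proof.
move=> hk; rewrite /V /tT /tB !mv_at_gen; try lia.
rewrite /gv.
have -> : (3*k-1) %% 3 = 2 by lia.
have -> : (3*k-3) %% 3 = 0 by lia.
have -> : (3*k) %% 3 = 0 by lia.
have -> : (3*k+1) %% 3 = 1 by lia.
by case: c; case: b.
Qed.

Lemma gen_lv n c b : locally_valid n (gen n c b).
Proof. apply/lvP => k hk; have hk' : 1 <= k <= n-1 by lia. by have [] := gen_V n c b k hk'. Qed.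

Lemma card2 (T : finType) (A : {pred T}) x y : x != y -> x \in A -> y \in A ->
  (forall z, z \in A -> z = x \/ z = y) -> #|A| = 2.
Proof.
move=> nxy hx hy H; apply/eqP; rewrite eqn_leq; apply/andP; split.
  rewrite leqNgt; apply/negP => /card_gt2P [a [b [c [[ha hb hc] [n1 n2 n3]]]]].
  by case: (H a ha) n1 n3 => ->; case: (H b hb) n2 => ->; case: (H c hc) => -> //;
     rewrite ?eqxx // eq_sym.
by apply/card_gt1P; exists x, y.
Qed.

Lemma nflip_gen n c b : 1 <= n -> nflip n (gen n c b) = 2.
Proof.
case: n => [//|n'] _; set n := n'.+1.
set m := mv_at (gen n c b).
have F : forall (i : 'I_2) (o : 'I_n),
   ((i,o) \in [pred ij : 'I_2 * 'I_n | flippable n (gen n c b) ij.1 (val ij.2).+1])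
   = if c then (if val i == 0 then o.+1 == n else o.+1 == 1)
     else (if val i == 0 then o.+1 == 1 else o.+1 == n).
  move=> i o; rewrite inE /= flipE; last by have := ltn_ord o; lia.
    2: exact: gen_lv.
  have T1 : o.+1 != 1 -> tT m (o.+1-1) = c /\ tB m (o.+1-1) = ~~c.
    move=> h; have hk : 1 <= o.+1-1 <= n-1 by have := ltn_ord o; lia.
    by have [] := gen_V n c b _ hk.
  have T2 : o.+1 != n -> tT m (o.+1) = c /\ tB m (o.+1) = ~~c.
    move=> h; have hk : 1 <= o.+1 <= n-1 by have := ltn_ord o; lia.
    by have [] := gen_V n c b _ hk.
  rewrite /fform -/m.
  case: (boolP (o.+1 == 1)) => h1; case: (boolP (o.+1 == n)) => h2 /=;
    rewrite ?(proj1 (T1 h1)) ?(proj2 (T1 h1)) ?(proj1 (T2 h2)) ?(proj2 (T2 h2));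
    clear T1 T2; clearbody m; by case: (val i == 0); case: c.
clear m; rewrite /nflip.
have i0 : 0 < 2 by [].
pose a : 'I_2 * 'I_n := (ord0, if c then ord_max else ord0).
pose d : 'I_2 * 'I_n := (ord_max, if c then ord0 else ord_max).
apply: (@card2 _ _ a d).
- by rewrite /a /d xpair_eqE; destruct c.
- by rewrite F /=; destruct c; rewrite /= ?eqxx.
- by rewrite F /=; destruct c; rewrite /= ?eqxx.
case=> i o; rewrite F /a /d.
have ho := ltn_ord o; have hi := ltn_ord i.
destruct c; case: eqP => hi0 /eqP ho'.
- by left; congr pair; apply: val_inj => /=; move: hi0 ho' ho hi; rewrite /n /=; lia.
- by right; congr pair; apply: val_inj => /=; move: hi0 ho' ho hi; rewrite /n /=; lia.
- by left; congr pair; apply: val_inj => /=; move: hi0 ho' ho hi; rewrite /n /=; lia.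
- by right; congr pair; apply: val_inj => /=; move: hi0 ho' ho hi; rewrite /n /=; lia.
Qed.

Lemma flipF n s (i : 'I_2) (o : 'I_n) : locally_valid n s ->
  ((i,o) \in [pred ij : 'I_2 * 'I_n | flippable n s ij.1 (val ij.2).+1]) = fform n (mv_at s) i o.+1.
Proof. by move=> hlv; rewrite inE /= flipE //; have := ltn_ord o; lia. Qed.

Lemma pair_neq2 (T1 T2 : eqType) (a c : T1) (b d : T2) : b != d -> (a,b) != (c,d).
Proof. by rewrite xpair_eqE negb_and => ->; rewrite orbT. Qed.
Lemma pair_neq1 (T1 T2 : eqType) (a c : T1) (b d : T2) : a != c -> (a,b) != (c,d).
Proof. by rewrite xpair_eqE negb_and => ->. Qed.

Lemma struct n' s : 1 <= n' -> locally_valid n'.+1 s -> nflip n'.+1 s = 2 ->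
  (forall k, 1 <= k <= n' -> tT (mv_at s) k) \/ (forall k, 1 <= k <= n' -> tB (mv_at s) k).
Proof.
move=> hn hlv h2.
have hV := elimT (lvP _ _) hlv.
set m := mv_at s in hV *.
pose A := [pred ij : 'I_2 * 'I_n'.+1 | flippable n'.+1 s ij.1 (val ij.2).+1].
have only2 : forall a b c, a \in A -> b \in A -> c \in A -> a != b -> b != c -> c != a -> False.
  move=> a b c ha hb hc n1 n2 n3.
  have : 2 < nflip n'.+1 s by rewrite /nflip; apply/card_gt2P; exists a, b, c.
  by rewrite h2.
pose i0 : 'I_2 := ord0. pose i1 : 'I_2 := ord_max.
have o0m : (ord0 : 'I_n'.+1) != ord_max by rewrite -val_eqE /=; lia.
have Fa : exists ia, (ia, ord0) \in A.
  have h11 : 1 <= 1 <= n'.+1.-1 by lia.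
  have := excl _ _ (hV 1 h11).
  case: (boolP (tT m 1)) => /= ht hb.
    by exists i1; rewrite flipF // /fform /= (negbTE hb) orbT.
  by exists i0; rewrite flipF // /fform /= ht orbT.
have Fb : exists ib, (ib, ord_max) \in A.
  have hk : 1 <= n' <= n'.+1.-1 by lia.
  have := excl _ _ (hV n' hk).
  have e : n'.+1 - 1 = n' by lia.
  case: (boolP (tT m n')) => /= ht hb.
    by exists i0; rewrite flipF // /fform /= subn1 /= (negbTE hb) orbT eqxx.
  by exists i1; rewrite flipF // /fform /= subn1 /= ht eqxx orbT.
case: Fa => ia ha; case: Fb => ib hb.
have one : tT m 1 || tB m 1.
  apply/negPn/negP; rewrite negb_or => /andP [t1 t2].
  have h0 : (i0, ord0) \in A by rewrite flipF // /fform /= t1 orbT.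
  have h1 : (i1, ord0) \in A by rewrite flipF // /fform /= t2 orbT.
  apply: (only2 _ _ _ h0 h1 hb).
  - by apply: pair_neq1.
  - by apply: pair_neq2.
  - by apply: pair_neq2; rewrite eq_sym.
have step : forall k, 1 <= k < n' -> (tT m k -> tT m k.+1) /\ (tB m k -> tB m k.+1).
  move=> k hk.
  have hkn : k < n'.+1 by lia.
  pose o : 'I_n'.+1 := Ordinal hkn.
  have oa : o != ord0 by rewrite -val_eqE /=; lia.
  have ob : o != ord_max by rewrite -val_eqE /=; lia.
  have nA : forall i, (i, o) \notin A.
    move=> i; apply/negP => hc.
    apply: (only2 _ _ _ ha hb hc).
    - by apply: pair_neq2.
    - by apply: pair_neq2; rewrite eq_sym.
    - by apply: pair_neq2.
  have hk' : 1 <= k <= n'.+1.-1 by lia.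
  have ex := excl _ _ (hV k hk').
  have e : k.+1 - 1 = k by lia.
  have kn : (k.+1 == n'.+1) = false by apply/negbTE; lia.
  have := nA i0; have := nA i1.
  have k1 : (k.+1 == 1) = false by lia.
  rewrite !flipF // /fform /= e kn k1 /=.
  move: ex; rewrite /m; case: (tT (mv_at s) k); case: (tB (mv_at s) k);
    case: (tT (mv_at s) k.+1); by case: (tB (mv_at s) k.+1).
have ind : forall c, (if c then tT m 1 else tB m 1) -> forall k, 1 <= k <= n' -> if c then tT m k else tB m k.
  move=> c h1; elim=> [|k IH] hk; first lia.
  case: (posnP k) => [-> //|kpos].
  have hk1 : 1 <= k < n' by lia.
  have hk2 : 1 <= k <= n' by lia.
  have [s1 s2] := step k hk1.
  have := IH hk2.
  by case: c h1 IH => _ _; [apply: s1|apply: s2].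
move/orP: one => [h | h]; [left; exact: (ind true h) | right; exact: (ind false h)].
Qed.

Lemma vert m k (c : bool) : V m k -> (if c then tT m k else tB m k) ->
  [/\ m (3*k) = m (3*k-3), m (3*k-1) = (if c then ~~ m (3*k-3) else m (3*k-3))
    & m (3*k+1) = (if c then m (3*k-3) else ~~ m (3*k-3))].
Proof.
rewrite /V /tT /tB; case: c; case: (m (3*k-1)); case: (m (3*k-3)); case: (m (3*k));
  case: (m (3*k+1)) => //= _ _; by split.
Qed.

Lemma vals n m (c : bool) : (forall k, 1 <= k <= n.-1 -> V m k) ->
  (forall k, 1 <= k <= n.-1 -> if c then tT m k else tB m k) ->
  forall d, d != 1 -> d <= 3*n-2 -> m d = gv c (m 0) d.
Proof.
move=> hV hc.
have key : forall k, 1 <= k <= n.-1 -> m (3*k-3) = m 0.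
  elim=> [|k IH] hk; first lia.
  case: (posnP k) => [->|kpos]; first by [].
  have hk' : 1 <= k <= n.-1 by lia.
  have [E _ _] := vert m k c (hV k hk') (hc k hk').
  by rewrite (_ : 3*k.+1-3 = 3*k) ?E ?IH //; lia.
move=> d hd1 hdn; rewrite /gv.
case: (posnP d) => [->|dpos]; first by rewrite mod0n; case: c {hc}.
have hr : d %% 3 < 3 := ltn_pmod d (isT : 0 < 3).
have hq := divn_eq d 3.
set q := d %/ 3 in hq.
move: hq hr; case E: (d %% 3) => [|[|[|r]]] hq hr //.
- have hk : 1 <= q <= n.-1 by lia.
  have [E1 _ _] := vert m q c (hV q hk) (hc q hk).
  rewrite (_ : d = 3*q); last by lia.
  by rewrite E1 key //; clear E1 hc; case: c.
- have hk : 1 <= q <= n.-1 by lia.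
  have [_ _ E1] := vert m q c (hV q hk) (hc q hk).
  rewrite (_ : d = 3*q+1); last by lia.
  by rewrite E1 key //; clear E1 hc; case: c.
- have hk : 1 <= q.+1 <= n.-1 by lia.
  have [_ E1 _] := vert m q.+1 c (hV q.+1 hk) (hc q.+1 hk).
  rewrite (_ : d = 3*q.+1-1); last by lia.
  by rewrite E1 key //; clear E1 hc; case: c.
Qed.

Lemma eq_gen n s c : 1 <= n -> size s = 3*n-2 ->
  (forall d, d != 1 -> d <= 3*n-2 -> mv_at s d = gv c (mv_at s 0) d) -> s = gen n c (mv_at s 0).
Proof.
move=> hn hs H; apply: (@eq_from_nth _ false); first by rewrite size_mkseq.
move=> p; rewrite hs => hp; rewrite /gen nth_mkseq //.
have h1 : crease p != 1 by rewrite /crease; case: ifP => h; lia.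
have h2 : crease p <= 3*n-2 by rewrite /crease; case: ifP => h; lia.
by rewrite -(H _ h1 h2) /mv_at pos_crease.
Qed.

Lemma char n' s : 1 <= n' -> size s = 3*n'.+1-2 -> locally_valid n'.+1 s ->
  nflip n'.+1 s = 2 -> exists c b, s = gen n'.+1 c b.
Proof.
move=> hn hs hlv h2; have hV := elimT (lvP _ _) hlv.
case: (struct n' s hn hlv h2) => H.
- exists true, (mv_at s 0); apply: eq_gen => //.
  exact: (vals n'.+1 (mv_at s) true hV).
- exists false, (mv_at s 0); apply: eq_gen => //.
  exact: (vals n'.+1 (mv_at s) false hV).
Qed.

Lemma lower n' s : locally_valid n'.+1 s -> 2 <= nflip n'.+1 s.
Proof.
move=> hlv; have hV := elimT (lvP _ _) hlv.
set m := mv_at s in hV *.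
pose A := [pred ij : 'I_2 * 'I_n'.+1 | flippable n'.+1 s ij.1 (val ij.2).+1].
pose i0 : 'I_2 := ord0. pose i1 : 'I_2 := ord_max.
rewrite /nflip; apply/card_gt1P.
case: (posnP n') => [en|hn].
  exists (i0, ord0), (i1, ord0).
  by rewrite !flipF // /fform /= en eqxx; split => //; apply: pair_neq1.
have o0m : (ord0 : 'I_n'.+1) != ord_max by rewrite -val_eqE /=; lia.
have Fa : exists ia, (ia, ord0) \in A.
  have h11 : 1 <= 1 <= n'.+1.-1 by lia.
  have := excl _ _ (hV 1 h11).
  case: (boolP (tT m 1)) => /= ht hb.
    by exists i1; rewrite flipF // /fform /= (negbTE hb) orbT.
  by exists i0; rewrite flipF // /fform /= ht orbT.
have Fb : exists ib, (ib, ord_max) \in A.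
  have hk : 1 <= n' <= n'.+1.-1 by lia.
  have := excl _ _ (hV n' hk).
  case: (boolP (tT m n')) => /= ht hb.
    by exists i0; rewrite flipF // /fform /= subn1 /= (negbTE hb) orbT eqxx.
  by exists i1; rewrite flipF // /fform /= subn1 /= ht eqxx orbT.
case: Fa => ia ha; case: Fb => ib hb.
by exists (ia, ord0), (ib, ord_max); split => //; apply: pair_neq2.
Qed.

Lemma take_gen n c b : 2 <= n -> take (3 * n.-1 - 2) (gen n c b) = gen n.-1 c b.
Proof.
move=> hn; rewrite /gen /mkseq -map_take take_iota.
by rewrite (_ : minn _ _ = 3*n.-1-2) //; lia.
Qed.

Theorem lemma4p5 :
  (forall n : nat, 1 <= n ->
     (exists mu : MV n, locally_valid n mu /\ nflip n mu = 2) /\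
     (forall mu : MV n, locally_valid n mu -> 2 <= nflip n mu)) /\
  (forall n : nat, 2 <= n ->
     #|[pred mu : MV n | locally_valid n mu && (nflip n mu == 2)]| = 4 /\
     (forall mu : MV n, locally_valid n mu -> nflip n mu = 2 -> magenta n mu)).
Proof.
split.
  move=> n hn; split.
    by exists (Tuple (size_gen n false false)); split; [exact: gen_lv | exact: nflip_gen].
  by case: n hn => [//|n'] _ mu hlv; apply: lower.
case=> [//|n'] hn.
have hn' : 1 <= n' by lia.
have chr : forall mu : MV n'.+1, locally_valid n'.+1 mu -> nflip n'.+1 mu = 2 ->
    exists c b, val mu = gen n'.+1 c b.
  by move=> mu hlv h2; apply: char => //; rewrite size_tuple.
split; last first.
  move=> mu hlv h2; rewrite /magenta h2 /restrict.
  have [c [b E]] := chr mu hlv h2.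
  by rewrite E take_gen // nflip_gen.
pose G := fun cb : bool * bool => Tuple (size_gen n'.+1 cb.1 cb.2).
have Ginj : injective G.
  move=> [c b] [c' b'] /(congr1 val) /= E.
  have E0 := congr1 (nth false ^~ 0) E; have E1 := congr1 (nth false ^~ 1) E.
  rewrite /= /gen !nth_mkseq /crease /gv /= in E0 E1; try lia.
  by move: E0 E1; clear E; case: c; case: b; case: c'; case: b'.
transitivity #|codom G|; last by rewrite card_codom // card_prod card_bool.
apply: eq_card => mu; rewrite inE.
apply/andP/codomP.
- case=> hlv /eqP h2; have [c [b E]] := chr mu hlv h2.
  by exists (c, b); apply: val_inj; rewrite E.
- case=> [[c b] ->]; split; first exact: gen_lv.
  by apply/eqP; apply: nflip_gen.
Qed.
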